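(* Let $I\subseteq\mathbb{R}$ be an interval and let $f,g\in C^2(I)$ with $g''(t)>0$ for all $t\in I$. For $a,b\in I$, $a\neq b$, put $$\Lambda_{f,g}(a,b)=\frac{f(a)+f(b)-2f\left(\frac{a+b}{2}\right)}{g(a)+g(b)-2g\left(\frac{a+b}{2}\right)}.$$ Then the inequality $\min\{a,b\}\le \Lambda_{f,g}(a,b)\le \max\{a,b\}$ holds for all $a,b\in I$ with $a\ne b$ if and only if $f''(t)=t\,g''(t)$ for every $t\in I$.
   Context: Since $g''>0$, the function $g$ is strictly convex on $I$, so the denominator $g(a)+g(b)-2g((a+b)/2)$ is strictly positive for $a\neq b$. *)

(* Defs.v *)
From Stdlib Require Import Reals Lra.
Open Scope R_scope.

Definition is_interval (I : R -> Prop) : Prop :=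
  forall x y z, I x -> I y -> x <= z <= y -> I z.

Definition nondegenerate (I : R -> Prop) : Prop :=
  exists a b, I a /\ I b /\ a < b.

(* f has derivative l at x relative to I (one-sided at endpoints). *)
Definition deriv_within (I : R -> Prop) (f : R -> R) (l x : R) : Prop :=
  limit1_in (fun y => (f y - f x) / (y - x)) (fun y => I y /\ y <> x) l x.

Definition continuous_within (I : R -> Prop) (h : R -> R) (x : R) : Prop :=
  limit1_in h I (h x) x.

Definition C2_on (I : R -> Prop) (f f1 f2 : R -> R) : Prop :=
  (forall x, I x -> deriv_within I f (f1 x) x) /\
  (forall x, I x -> deriv_within I f1 (f2 x) x) /\
  (forall x, I x -> continuous_within I f2 x).

Definition Lambda (f g : R -> R) (a b : R) : R :=
  (f a + f b - 2 * f ((a + b) / 2)) / (g a + g b - 2 * g ((a + b) / 2)).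

(* Main.v *)
Require Import Defs.
From Stdlib Require Import Reals Lra.
Open Scope R_scope.

Lemma lim_ext (F G : R -> R) D l x :
  (forall y, D y -> F y = G y) -> limit1_in F D l x -> limit1_in G D l x.
Proof.
  intros He H eps Heps. destruct (H eps Heps) as [alp [Ha Hk]].
  exists alp; split; auto. intros y [Dy Hy]. rewrite <- He by auto. apply Hk; auto.
Qed.

Lemma deriv_combo I f g l m c x :
  deriv_within I f l x -> deriv_within I g m x ->
  deriv_within I (fun y => f y - c * g y) (l - c * m) x.
Proof.
  intros Hf Hg. unfold deriv_within in *.
  apply lim_ext with (F := fun y => (f y - f x) / (y - x) - (fun _ => c) y * ((g y - g x)/(y-x))).
  - intros y [_ Hy]. simpl. field. lra.
  - apply limit_minus; auto. apply limit_mul; auto.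
    apply (limit_free (fun _ => c) _ x x).
Qed.

Lemma deriv_cont I H l x :
  deriv_within I H l x -> forall eps, 0 < eps -> exists d, 0 < d /\
  forall y, I y -> Rabs (y - x) < d -> Rabs (H y - H x) < eps.
Proof.
  intros Hd eps He. destruct (Hd 1 Rlt_0_1) as [alp [Ha Hk]].
  assert (Hp : 0 < Rabs l + 1) by (pose proof (Rabs_pos l); lra).
  exists (Rmin alp (eps / (Rabs l + 1))). split.
  { apply Rmin_pos; auto. apply Rdiv_lt_0_compat; lra. }
  intros y Iy Hy.
  destruct (Req_dec y x) as [->|Hne].
  { replace (H x - H x) with 0 by ring. rewrite Rabs_R0; auto. }
  assert (Hy1 : Rabs (y - x) < alp) by (pose proof (Rmin_l alp (eps / (Rabs l + 1))); lra).
  assert (Hy2 : Rabs (y - x) < eps / (Rabs l + 1)) by (pose proof (Rmin_r alp (eps / (Rabs l + 1))); lra).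
  specialize (Hk y (conj (conj Iy Hne) Hy1)). simpl in Hk. unfold R_dist in Hk.
  set (q := (H y - H x) / (y - x)) in *.
  assert (Hq : H y - H x = q * (y - x)) by (unfold q; field; lra).
  rewrite Hq, Rabs_mult.
  assert (Rabs q < Rabs l + 1).
  { replace q with ((q - l) + l) by ring. pose proof (Rabs_triang (q-l) l). lra. }
  assert (Rabs (y - x) * (Rabs l + 1) < eps).
  { apply Rmult_lt_reg_r with (/ (Rabs l + 1)). apply Rinv_0_lt_compat; lra.
    rewrite Rmult_assoc, Rinv_r by lra. lra. }
  pose proof (Rabs_pos (y - x)). pose proof (Rabs_pos q). nra.
Qed.

Definition clamp a b y := Rmax a (Rmin b y).

Lemma clamp_prop a b c y : a <= c <= b ->
  a <= clamp a b y <= b /\ Rabs (clamp a b y - c) <= Rabs (y - c).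
Proof.
  intros Hc. unfold clamp, Rmax, Rmin, Rabs.
  repeat (destruct Rle_dec || destruct Rcase_abs); lra.
Qed.

Lemma clamp_in a b y : a <= y <= b -> clamp a b y = y.
Proof. intros. unfold clamp, Rmax, Rmin. repeat destruct Rle_dec; lra. Qed.

Lemma mvt_within I H H1 a b : is_interval I -> I a -> I b -> a < b ->
  (forall x, I x -> deriv_within I H (H1 x) x) ->
  exists c, a < c < b /\ H b - H a = H1 c * (b - a).
Proof.
  intros HI Ia Ib Hab Hd.
  set (G := fun y => H (clamp a b y)).
  assert (Hder : forall c, a < c < b -> derivable_pt_lim G c (H1 c)).
  { intros c Hc eps He.
    assert (Ic : I c) by (apply (HI a b); auto; lra).
    destruct (Hd c Ic eps He) as [alp [Ha Hk]].
    assert (Hpos : 0 < Rmin alp (Rmin (c - a) (b - c))).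
    { repeat apply Rmin_pos; lra. }
    exists (mkposreal _ Hpos). intros h Hh0 Hh. simpl in Hh.
    pose proof (Rmin_l alp (Rmin (c - a) (b - c))).
    pose proof (Rmin_r alp (Rmin (c - a) (b - c))).
    pose proof (Rmin_l (c - a) (b - c)). pose proof (Rmin_r (c - a) (b - c)).
    assert (Hr : - (Rmin alp (Rmin (c - a) (b - c))) < h < Rmin alp (Rmin (c - a) (b - c))).
    { unfold Rabs in Hh; destruct Rcase_abs; lra. }
    unfold G. rewrite !clamp_in by lra.
    assert (Iy : I (c + h)) by (apply (HI a b); auto; lra).
    assert (Hne : c + h <> c) by lra.
    assert (Hdist : R_dist (c + h) c < alp).
    { unfold R_dist. replace (c + h - c) with h by ring. lra. }
    specialize (Hk (c + h) (conj (conj Iy Hne) Hdist)). simpl in Hk. unfold R_dist in Hk.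
    replace (c + h - c) with h in Hk by ring. exact Hk. }
  assert (Hcont : forall c, a <= c <= b -> continuity_pt G c).
  { intros c Hc eps He.
    assert (Ic : I c) by (apply (HI a b); auto; lra).
    destruct (deriv_cont I H (H1 c) c (Hd c Ic) eps He) as [d [Hd0 Hk]].
    exists d; split; auto. intros y [_ Hy]. simpl in *. unfold R_dist in *.
    unfold G. rewrite (clamp_in a b c) by lra.
    destruct (clamp_prop a b c y Hc) as [Hin Hle].
    apply Hk. apply (HI a b); auto. lra. }
  set (pr1 := fun c (P : a < c < b) => exist (fun l => derivable_pt_abs G c l) (H1 c) (Hder c P)).
  destruct (MVT G id a b pr1 (fun c _ => derivable_pt_id c) Hab Hcont
    (fun c _ => derivable_continuous_pt id c (derivable_pt_id c))) as [c [P Heq]].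
  exists c; split; auto.
  rewrite derive_pt_id in Heq. simpl in Heq. unfold id, G in Heq.
  rewrite !clamp_in in Heq by lra. lra.
Qed.

Lemma conv I H H1 H2 a b : is_interval I -> I a -> I b -> a < b ->
  (forall x, I x -> deriv_within I H (H1 x) x) ->
  (forall x, I x -> deriv_within I H1 (H2 x) x) ->
  exists z d, a < z < b /\ 0 < d /\ H a + H b - 2 * H ((a + b) / 2) = H2 z * d.
Proof.
  intros HI Ia Ib Hab Hd1 Hd2.
  set (m := (a + b) / 2).
  assert (Im : I m) by (apply (HI a b); auto; unfold m; lra).
  destruct (mvt_within I H H1 a m HI Ia Im ltac:(unfold m; lra) Hd1) as [e [He Hee]].
  destruct (mvt_within I H H1 m b HI Im Ib ltac:(unfold m; lra) Hd1) as [x [Hx Hxe]].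
  assert (Ie : I e) by (apply (HI a b); auto; unfold m in *; lra).
  assert (Ix : I x) by (apply (HI a b); auto; unfold m in *; lra).
  destruct (mvt_within I H1 H2 e x HI Ie Ix ltac:(lra) Hd2) as [z [Hz Hze]].
  exists z, ((x - e) * ((b - a) / 2)). split; [unfold m in *; lra|]. split.
  { apply Rmult_lt_0_compat; lra. }
  replace (H a + H b - 2 * H m) with ((H b - H m) - (H m - H a)) by ring.
  rewrite Hee, Hxe. replace (b - m) with ((b - a) / 2) by (unfold m; field).
  replace (m - a) with ((b - a) / 2) by (unfold m; field).
  replace (H2 z * ((x - e) * ((b - a) / 2))) with ((H2 z * (x - e)) * ((b - a) / 2)) by ring.
  rewrite <- Hze. ring.
Qed.

Lemma conv_combo I f f1 f2 g g1 g2 c a b : is_interval I -> I a -> I b -> a < b ->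
  C2_on I f f1 f2 -> C2_on I g g1 g2 ->
  exists z d, a < z < b /\ 0 < d /\
    (f a + f b - 2 * f ((a + b) / 2)) - c * (g a + g b - 2 * g ((a + b) / 2))
    = (f2 z - c * g2 z) * d.
Proof.
  intros HI Ia Ib Hab [Hf1 [Hf2 _]] [Hg1 [Hg2 _]].
  destruct (conv I (fun y => f y - c * g y) (fun y => f1 y - c * g1 y)
     (fun y => f2 y - c * g2 y) a b HI Ia Ib Hab) as [z [d [Hz [Hd Heq]]]].
  - intros x Ix. apply deriv_combo; auto.
  - intros x Ix. apply deriv_combo; auto.
  - exists z, d. split; auto. split; auto. rewrite <- Heq. ring.
Qed.

Lemma Ng_pos I g g1 g2 a b : is_interval I -> I a -> I b -> a < b ->
  C2_on I g g1 g2 -> (forall t, I t -> 0 < g2 t) ->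
  0 < g a + g b - 2 * g ((a + b) / 2).
Proof.
  intros HI Ia Ib Hab [Hg1 [Hg2 _]] Hp.
  destruct (conv I g g1 g2 a b HI Ia Ib Hab Hg1 Hg2) as [z [d [Hz [Hd Heq]]]].
  rewrite Heq. apply Rmult_lt_0_compat; auto. apply Hp. apply (HI a b); auto; lra.
Qed.

Lemma two_points I t r : is_interval I -> nondegenerate I -> I t -> 0 < r ->
  exists a b, I a /\ I b /\ a < b /\ Rabs (a - t) < r /\ Rabs (b - t) < r.
Proof.
  intros HI [p [q [Ip [Iq Hpq]]]] It Hr.
  destruct (Rlt_or_le t q) as [Htq|Hqt].
  - set (b := t + Rmin (r/2) (q - t)).
    pose proof (Rmin_l (r/2) (q - t)). pose proof (Rmin_r (r/2) (q - t)).
    assert (0 < Rmin (r/2) (q - t)) by (apply Rmin_pos; lra).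
    exists t, b. repeat split; auto.
    + apply (HI t q); auto; unfold b; lra.
    + unfold b; lra.
    + replace (t - t) with 0 by ring. rewrite Rabs_R0; auto.
    + unfold b. rewrite Rabs_right; lra.
  - set (a := t - Rmin (r/2) (t - p)).
    pose proof (Rmin_l (r/2) (t - p)). pose proof (Rmin_r (r/2) (t - p)).
    assert (0 < Rmin (r/2) (t - p)) by (apply Rmin_pos; lra).
    exists a, t. repeat split; auto.
    + apply (HI p t); auto; unfold a; lra.
    + unfold a; lra.
    + unfold a. rewrite Rabs_left; lra.
    + replace (t - t) with 0 by ring. rewrite Rabs_R0; auto.
Qed.

Lemma local_cont I f2 g2 c t eps : I t -> 0 < eps ->
  continuous_within I f2 t -> continuous_within I g2 t ->
  exists r, 0 < r /\ forall s, I s -> Rabs (s - t) < r ->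
    Rabs ((f2 s - c * g2 s) - (f2 t - c * g2 t)) < eps.
Proof.
  intros It He Cf Cg.
  assert (Hp : 0 < 2 * (Rabs c + 1)) by (pose proof (Rabs_pos c); lra).
  destruct (Cf (eps / 2) ltac:(lra)) as [r1 [Hr1 Hk1]].
  destruct (Cg (eps / (2 * (Rabs c + 1))) ltac:(apply Rdiv_lt_0_compat; lra)) as [r2 [Hr2 Hk2]].
  exists (Rmin r1 r2). split; [apply Rmin_pos; auto|].
  intros s Is Hs.
  pose proof (Rmin_l r1 r2). pose proof (Rmin_r r1 r2).
  assert (D1 : R_dist s t < r1) by (unfold R_dist; lra).
  assert (D2 : R_dist s t < r2) by (unfold R_dist; lra).
  specialize (Hk1 s (conj Is D1)).
  specialize (Hk2 s (conj Is D2)).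
  simpl in Hk1, Hk2. unfold R_dist in Hk1, Hk2.
  replace ((f2 s - c * g2 s) - (f2 t - c * g2 t)) with ((f2 s - f2 t) + - (c * (g2 s - g2 t))) by ring.
  eapply Rle_lt_trans. apply Rabs_triang. rewrite Rabs_Ropp, Rabs_mult.
  assert (Rabs c * Rabs (g2 s - g2 t) <= (Rabs c + 1) * (eps / (2 * (Rabs c + 1)))).
  { apply Rmult_le_compat; try apply Rabs_pos; lra. }
  assert ((Rabs c + 1) * (eps / (2 * (Rabs c + 1))) = eps / 2) by (field; lra).
  lra.
Qed.

Lemma back_dir I f f1 f2 g g1 g2 a b : is_interval I -> I a -> I b -> a < b ->
  C2_on I f f1 f2 -> C2_on I g g1 g2 -> (forall t, I t -> 0 < g2 t) ->
  (forall t, I t -> f2 t = t * g2 t) ->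
  a <= Lambda f g a b <= b.
Proof.
  intros HI Ia Ib Hab Hf Hg Hp Heq.
  pose proof (Ng_pos I g g1 g2 a b HI Ia Ib Hab Hg Hp) as HN.
  set (Ng := g a + g b - 2 * g ((a + b) / 2)) in *.
  set (Nf := f a + f b - 2 * f ((a + b) / 2)).
  assert (HL : Nf = Lambda f g a b * Ng) by (unfold Lambda, Nf, Ng in *; field; lra).
  destruct (conv_combo I f f1 f2 g g1 g2 a a b HI Ia Ib Hab Hf Hg) as [z [d [Hz [Hd E1]]]].
  assert (Iz : I z) by (apply (HI a b); auto; lra).
  rewrite Heq in E1 by auto. pose proof (Hp z Iz).
  destruct (conv_combo I f f1 f2 g g1 g2 b a b HI Ia Ib Hab Hf Hg) as [z' [d' [Hz' [Hd' E2]]]].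
  assert (Iz' : I z') by (apply (HI a b); auto; lra).
  rewrite Heq in E2 by auto. pose proof (Hp z' Iz').
  fold Nf Ng in E1, E2.
  assert (0 <= Nf - a * Ng).
  { rewrite E1. replace (z * g2 z - a * g2 z) with ((z - a) * g2 z) by ring.
    apply Rmult_le_pos; [|lra]. apply Rmult_le_pos; lra. }
  assert (Nf - b * Ng <= 0).
  { rewrite E2. replace ((z' * g2 z' - b * g2 z') * d') with (- ((b - z') * g2 z' * d')) by ring.
    assert (0 <= (b - z') * g2 z' * d'). { apply Rmult_le_pos; [|lra]. apply Rmult_le_pos; lra. }
    lra. }
  rewrite HL in *. split; nra.
Qed.

Theorem theorem1 (I : R -> Prop) (HI : is_interval I) (HInd : nondegenerate I)
  (f f1 f2 g g1 g2 : R -> R)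
  (Hf : C2_on I f f1 f2) (Hg : C2_on I g g1 g2)
  (Hg2 : forall t, I t -> 0 < g2 t) :
  (forall a b, I a -> I b -> a <> b ->
     Rmin a b <= Lambda f g a b <= Rmax a b) <->
  (forall t, I t -> f2 t = t * g2 t).
Proof.
  split.
  - intros Hbd t It.
    pose proof (Hg2 t It) as Hgt.
    destruct Hf as [Hf1 [Hf2 Cf]]. destruct Hg as [Hg1' [Hg2' Cg]].
    assert (Hf' : C2_on I f f1 f2) by (repeat split; auto).
    assert (Hg' : C2_on I g g1 g2) by (repeat split; auto).
    destruct (total_order_T (f2 t) (t * g2 t)) as [[Hlt|Heq]|Hgtt]; auto; exfalso.
    + set (D := t * g2 t - f2 t).
      set (dl := D / (2 * g2 t)).
      assert (Hdl : 0 < dl) by (unfold dl, D; apply Rdiv_lt_0_compat; lra).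
      set (c := t - dl).
      assert (HK : f2 t - c * g2 t = - (D / 2)) by (unfold c, dl, D; field; lra).
      destruct (local_cont I f2 g2 c t (D/2) It ltac:(unfold D; lra) (Cf t It) (Cg t It)) as [r [Hr Hk]].
      destruct (two_points I t (Rmin r dl) HI HInd It ltac:(apply Rmin_pos; lra)) as [a [b [Ia [Ib [Hab [Ha Hb]]]]]].
      pose proof (Rmin_l r dl). pose proof (Rmin_r r dl).
      destruct (conv_combo I f f1 f2 g g1 g2 c a b HI Ia Ib Hab Hf' Hg') as [z [d [Hz [Hd E]]]].
      assert (Iz : I z) by (apply (HI a b); auto; lra).
      assert (Hzt : Rabs (z - t) < r).
      { unfold Rabs in *; repeat destruct Rcase_abs; lra. }
      specialize (Hk z Iz Hzt). rewrite HK in Hk.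
      assert (Kz : f2 z - c * g2 z < 0).
      { unfold Rabs in Hk; destruct Rcase_abs; lra. }
      assert (Hac : c < a) by (unfold c; unfold Rabs in Ha; destruct Rcase_abs; lra).
      pose proof (Ng_pos I g g1 g2 a b HI Ia Ib Hab Hg' Hg2) as HN.
      specialize (Hbd a b Ia Ib ltac:(lra)). rewrite Rmin_left in Hbd by lra.
      set (Ng := g a + g b - 2 * g ((a + b) / 2)) in *.
      set (Nf := f a + f b - 2 * f ((a + b) / 2)) in *.
      assert (HL : Nf = Lambda f g a b * Ng) by (unfold Lambda, Nf, Ng in *; field; lra).
      assert (Nf - c * Ng < 0) by (rewrite E; nra).
      rewrite HL in *. nra.
    + set (D := f2 t - t * g2 t).
      set (dl := D / (2 * g2 t)).
      assert (Hdl : 0 < dl) by (unfold dl, D; apply Rdiv_lt_0_compat; lra).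
      set (c := t + dl).
      assert (HK : f2 t - c * g2 t = D / 2) by (unfold c, dl, D; field; lra).
      destruct (local_cont I f2 g2 c t (D/2) It ltac:(unfold D; lra) (Cf t It) (Cg t It)) as [r [Hr Hk]].
      destruct (two_points I t (Rmin r dl) HI HInd It ltac:(apply Rmin_pos; lra)) as [a [b [Ia [Ib [Hab [Ha Hb]]]]]].
      pose proof (Rmin_l r dl). pose proof (Rmin_r r dl).
      destruct (conv_combo I f f1 f2 g g1 g2 c a b HI Ia Ib Hab Hf' Hg') as [z [d [Hz [Hd E]]]].
      assert (Iz : I z) by (apply (HI a b); auto; lra).
      assert (Hzt : Rabs (z - t) < r).
      { unfold Rabs in *; repeat destruct Rcase_abs; lra. }
      specialize (Hk z Iz Hzt). rewrite HK in Hk.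
      assert (Kz : 0 < f2 z - c * g2 z).
      { unfold Rabs in Hk; destruct Rcase_abs; lra. }
      assert (Hbc : b < c) by (unfold c; unfold Rabs in Hb; destruct Rcase_abs; lra).
      pose proof (Ng_pos I g g1 g2 a b HI Ia Ib Hab Hg' Hg2) as HN.
      specialize (Hbd a b Ia Ib ltac:(lra)). rewrite Rmax_right in Hbd by lra.
      set (Ng := g a + g b - 2 * g ((a + b) / 2)) in *.
      set (Nf := f a + f b - 2 * f ((a + b) / 2)) in *.
      assert (HL : Nf = Lambda f g a b * Ng) by (unfold Lambda, Nf, Ng in *; field; lra).
      assert (0 < Nf - c * Ng) by (rewrite E; nra).
      rewrite HL in *. nra.
  - intros Heq a b Ia Ib Hne.
    destruct (Rlt_or_le a b) as [Hab|Hba].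
    + rewrite Rmin_left, Rmax_right by lra.
      apply (back_dir I f f1 f2 g g1 g2); auto.
    + assert (b < a) by lra.
      rewrite Rmin_right, Rmax_left by lra.
      replace (Lambda f g a b) with (Lambda f g b a)
        by (unfold Lambda; rewrite (Rplus_comm b a); f_equal; ring).
      apply (back_dir I f f1 f2 g g1 g2); auto.
Qed.
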